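(* On $\mathbb{R}^2$ with standard coordinates $(x,y)$, let $E_1:=x\frac{\partial}{\partial x}+\frac{\partial}{\partial y}$, $E_2:=-\frac{\partial}{\partial x}$, with dual coframe $E^1=dy$, $E^2=-dx+x\,dy$, and let $F\colon T\mathbb{R}^2\to\mathbb{R}$ be the Randers-type Finsler function $F=\sqrt{4(E^1)^2+12(E^2)^2}-E^1=\sqrt{4(dy)^2+12(-dx+x\,dy)^2}-dy$. Let $\nabla$ be the covariant derivative on $\mathbb{R}^2$ with $\nabla E_1=\nabla E_2=0$. Then: (i) $F$ is holonomy invariant with respect to $\nabla$, so $(\mathbb{R}^2,F)$ is a generalized Berwald manifold; (ii) $\nabla$ is the only covariant derivative on $\mathbb{R}^2$ with respect to which $F$ is holonomy invariant; (iii) the torsion of $\nabla$ satisfies $T^\nabla(E_1,E_2)=-\frac{\partial}{\partial x}\neq0$. Consequently no torsion-free covariant derivative makes $F$ holonomy invariant, i.e. $(\mathbb{R}^2,F)$ is not a Berwald manifold.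
   Context: A function $F$ on $TM$ is holonomy invariant with respect to a covariant derivative $\nabla$ if $F_{\gamma(t)}\circ P^t_\gamma=F_{\gamma(0)}$ for every regular smooth curve $\gamma\colon I\to M$ ($I$ an open interval containing $0$) and every $t\in I$, where $F_p$ is the restriction of $F$ to $T_pM$ and $P^t_\gamma$ is $\nabla$-parallel translation from $\gamma(0)$ to $\gamma(t)$. A Finsler manifold $(M,F)$ is a generalized Berwald manifold if $F$ is holonomy invariant with respect to some covariant derivative on $M$, and a Berwald manifold if this covariant derivative can be chosen torsion-free. The torsion is $T^\nabla(X,Y)=\nabla_XY-\nabla_YX-[X,Y]$. *)

(* Defs.v *)
From Stdlib Require Import Reals.
Open Scope R_scope.

(* Coordinate indices: false = x, true = y. Vectors are  bool -> R. *)
Definition bsum (f : bool -> R) : R := f false + f true.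

Definition partial (i : bool) (f : R -> R -> R) (x y d : R) : Prop :=
  if i then derivable_pt_lim (fun s => f x s) y d
       else derivable_pt_lim (fun s => f s y) x d.

Definition continuous2 (f : R -> R -> R) (x y : R) : Prop :=
  forall eps, 0 < eps -> exists delta, 0 < delta /\
    forall x' y', Rabs (x' - x) < delta -> Rabs (y' - y) < delta ->
      Rabs (f x' y' - f x y) < eps.

Definition smooth2 (f : R -> R -> R) : Prop :=
  exists D : list bool -> R -> R -> R,
    (forall x y, D nil x y = f x y) /\
    forall l x y,
      partial false (D l) x y (D (cons false l) x y) /\
      partial true (D l) x y (D (cons true l) x y) /\
      continuous2 (D l) x y.

Definition smooth_on (a b : R) (g : R -> R) : Prop :=
  exists D : nat -> R -> R,
    (forall t, D O t = g t) /\
    forall n t, a < t < b -> derivable_pt_lim (D n) t (D (S n) t).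

(* A covariant derivative on R^2 is given by its Christoffel symbols in the
   global chart:  nabla_{d_i} d_j = sum_k Gam k i j * d_k .  *)
Definition christoffel := bool -> bool -> bool -> R -> R -> R.

Definition smooth_conn (Gam : christoffel) : Prop :=
  forall k i j, smooth2 (Gam k i j).

Definition parallel_field (Gam : christoffel) (Y : bool -> R -> R -> R) : Prop :=
  exists dY : bool -> bool -> R -> R -> R,
    (forall i k x y, partial i (Y k) x y (dY i k x y)) /\
    (forall i k x y, dY i k x y + bsum (fun j => Gam k i j x y * Y j x y) = 0).

Definition regular_curve (a b : R) (gam dgam : bool -> R -> R) : Prop :=
  (forall i, smooth_on a b (gam i)) /\
  (forall i t, a < t < b -> derivable_pt_lim (gam i) t (dgam i t)) /\
  (forall t, a < t < b -> dgam false t <> 0 \/ dgam true t <> 0).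

Definition parallel_along (Gam : christoffel) (a b : R) (gam dgam V : bool -> R -> R)
  : Prop :=
  exists dV : bool -> R -> R,
    (forall k t, a < t < b -> derivable_pt_lim (V k) t (dV k t)) /\
    (forall k t, a < t < b ->
       dV k t + bsum (fun i => bsum (fun j =>
          Gam k i j (gam false t) (gam true t) * dgam i t * V j t)) = 0).

(* Function on TR^2: F x y v1 v2 is F at the point (x,y) of v = v1 d_x + v2 d_y. *)
Definition finsler_fun := R -> R -> R -> R -> R.

(* Holonomy invariance: F_{gam t} (P^t_gam v) = F_{gam 0} v, where P^t_gam v = V t for
   the parallel field V along gam with V 0 = v. *)
Definition holonomy_invariant (Gam : christoffel) (F : finsler_fun) : Prop :=
  forall (a b : R) (gam dgam V : bool -> R -> R),
    a < 0 < b ->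
    regular_curve a b gam dgam ->
    parallel_along Gam a b gam dgam V ->
    forall t, a < t < b ->
      F (gam false t) (gam true t) (V false t) (V true t)
      = F (gam false 0) (gam true 0) (V false 0) (V true 0).

(* Torsion at (x,y) on vectors X Y:
   T(X,Y)^k = (nabla_X Y - nabla_Y X - [X,Y])^k = sum_{i,j} (Gam k i j - Gam k j i) X^i Y^j. *)
Definition torsion (Gam : christoffel) (x y : R) (X Y : bool -> R) (k : bool) : R :=
  bsum (fun i => bsum (fun j => (Gam k i j x y - Gam k j i x y) * X i * Y j)).

Definition torsion_free (Gam : christoffel) : Prop :=
  forall k i j x y, Gam k i j x y = Gam k j i x y.

Definition Efr1 (k : bool) (x y : R) : R := if k then 1 else x.
Definition Efr2 (k : bool) (x y : R) : R := if k then 0 else -1.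

Definition Frand : finsler_fun := fun x y v1 v2 =>
  sqrt (4 * v2 ^ 2 + 12 * (- v1 + x * v2) ^ 2) - v2.

(* Main.v *)
From Stdlib Require Import Reals Lra Lia FunctionalExtensionality.
From Coquelicot Require Import Coquelicot.
Require Import Defs.
Open Scope R_scope.

Lemma cont_bound (f : R -> R) : (forall t, continuity_pt f t) ->
  exists M, 0 <= M /\ forall t, -1 <= t <= 1 -> Rabs (f t) <= M.
Proof.
  intros Hf.
  destruct (continuity_ab_maj (fun t => Rabs (f t)) (-1) 1) as [Mx [H1 H2]].
  - lra.
  - intros c _. apply (continuity_pt_comp f Rabs). apply Hf. apply Rcontinuity_abs.
  - exists (Rabs (f Mx)). split. apply Rabs_pos. intros t Ht. apply H1. exact Ht.
Qed.

Lemma RInt_deriv (f : R -> R) : (forall t, continuity_pt f t) ->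
  forall t, derivable_pt_lim (fun t => RInt f 0 t) t (f t).
Proof.
  intros Hf t. apply is_derive_Reals.
  apply (is_derive_RInt f (fun t => RInt f 0 t) 0 t).
  - apply filter_forall. intros x. apply (@RInt_correct R_CompleteNormedModule). apply (@ex_RInt_continuous R_CompleteNormedModule).
    intros z _. apply continuity_pt_filterlim. apply Hf.
  - apply continuity_pt_filterlim. apply Hf.
Qed.

Lemma RInt_abs_bound (f : R -> R) (t M : R) : (forall s, continuity_pt f s) ->
  (forall s, Rabs s <= Rabs t -> Rabs (f s) <= M) ->
  Rabs (RInt f 0 t) <= Rabs t * M.
Proof.
  intros Hc Hb.
  assert (Hex : forall a b, ex_RInt f a b).
  { intros a b. apply (@ex_RInt_continuous R_CompleteNormedModule). intros z _. apply continuity_pt_filterlim. apply Hc. }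
  destruct (Rle_lt_dec 0 t) as [Ht|Ht].
  - rewrite (Rabs_right t) by lra.
    replace (t * M) with ((t - 0) * M) by ring.
    apply abs_RInt_le_const; auto.
    intros s Hs. apply Hb. rewrite !Rabs_right by lra. lra.
  - rewrite <- opp_RInt_swap by auto. unfold opp; simpl.
    rewrite Rabs_Ropp. rewrite (Rabs_left t) by lra.
    replace (- t * M) with ((0 - t) * M) by ring.
    apply abs_RInt_le_const; auto. lra.
    intros s Hs. apply Hb. rewrite (Rabs_left t) by lra.
    unfold Rabs; destruct (Rcase_abs s); lra.
Qed.

Definition clamp (r t : R) := Rmax (-r) (Rmin r t).

Lemma clamp_abs r t : 0 <= r -> Rabs (clamp r t) <= r.
Proof. intros. unfold clamp, Rmax, Rmin.
  destruct (Rle_dec r t); destruct (Rle_dec (-r) _); unfold Rabs; destruct (Rcase_abs _); lra. Qed.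

Lemma clamp_id r t : Rabs t <= r -> clamp r t = t.
Proof. intros H. unfold clamp, Rmax, Rmin. revert H.
  unfold Rabs; destruct (Rcase_abs t); destruct (Rle_dec r t); destruct (Rle_dec (-r) _); intros; lra. Qed.

Lemma clamp_lip r t s : 0 <= r -> Rabs (clamp r t - clamp r s) <= Rabs (t - s).
Proof. intros. unfold clamp, Rmax, Rmin.
  destruct (Rle_dec r t); destruct (Rle_dec r s);
  destruct (Rle_dec (-r) (if Rle_dec r t then r else t)) ;
  destruct (Rle_dec (-r) (if Rle_dec r s then r else s)) ;
  repeat match goal with |- context [Rle_dec ?a ?b] => destruct (Rle_dec a b) end;
  unfold Rabs; repeat destruct (Rcase_abs _); lra. Qed.

Lemma clamp_cont r t : 0 <= r -> continuity_pt (clamp r) t.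
Proof. intros Hr eps Heps. exists eps. split. lra.
  intros x [_ Hx]. simpl in *. unfold R_dist in *.
  eapply Rle_lt_trans. apply clamp_lip; auto. exact Hx. Qed.

Lemma deriv_loc (f g : R -> R) x l d : 0 < d -> (forall t, Rabs (t - x) < d -> g t = f t) ->
  derivable_pt_lim f x l -> derivable_pt_lim g x l.
Proof.
  intros Hd Heq Hf eps Heps. destruct (Hf eps Heps) as [del Hdel].
  assert (Hm : 0 < Rmin del d) by (apply Rmin_pos; [apply cond_pos|lra]).
  exists (mkposreal _ Hm). intros h Hh Hh2. simpl in Hh2.
  rewrite !Heq. apply Hdel; auto. eapply Rlt_le_trans. exact Hh2. apply Rmin_l.
  replace (x - x) with 0 by ring. rewrite Rabs_R0; lra.
  replace (x + h - x) with h by ring. eapply Rlt_le_trans. exact Hh2. apply Rmin_r.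
Qed.

Lemma geo_cv (c : R) : 0 <= c -> {l | Un_cv (fun n => sum_f_R0 (fun i => Rabs (c * (/2)^i)) n) l}.
Proof.
  intros Hc. exists (c * / (1 - /2)).
  assert (Hg := GP_infinite (/2)). 
  assert (H2 : Rabs (/2) < 1) by (rewrite Rabs_right; lra).
  specialize (Hg H2).
  assert (Hk : Un_cv (fun _ : nat => c) c).
  { intros eps He. exists O. intros. unfold Rdist. replace (c - c) with 0 by ring. rewrite Rabs_R0. lra. }
  assert (HH := CV_mult _ _ _ _ Hk Hg).
  intros eps He. destruct (HH eps He) as [N HN]. exists N. intros n Hn.
  specialize (HN n Hn).
  replace (sum_f_R0 (fun i => Rabs (c * (/2) ^ i)) n) with (c * sum_f_R0 (fun n0 : nat => 1 * (/2) ^ n0) n). exact HN.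
  rewrite scal_sum. apply sum_eq. intros i _. rewrite Rabs_right. ring.
  apply Rle_ge. apply Rmult_le_pos. auto. apply pow_le. lra.
Qed.

Lemma cv_shift (u : nat -> R) l : Un_cv u l -> Un_cv (fun n => u (S n)) l.
Proof. intros H eps He. destruct (H eps He) as [N HN]. exists N. intros n Hn. apply HN. lia. Qed.

Lemma cv_const (c : R) : Un_cv (fun _ : nat => c) c.
Proof. intros eps He. exists O. intros. unfold Rdist. replace (c - c) with 0 by ring. rewrite Rabs_R0. lra. Qed.

Fixpoint Wi (b : bool -> bool -> R -> R) (v : bool -> R) (n : nat) : bool -> R -> R :=
  match n with
  | O => fun k _ => v k
  | S n' => fun k t => RInt (fun s => bsum (fun j => b k j s * Wi b v n' j s)) 0 t
  end.

Lemma integrand_cont (b : bool -> bool -> R -> R) (W : bool -> R -> R) k :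
  (forall k j t, continuity_pt (b k j) t) -> (forall j t, continuity_pt (W j) t) ->
  forall t, continuity_pt (fun s => bsum (fun j => b k j s * W j s)) t.
Proof.
  intros Hb HW t. unfold bsum.
  apply (continuity_pt_plus (fun s => b k false s * W false s) (fun s => b k true s * W true s));
  apply (continuity_pt_mult); auto.
Qed.

Lemma Wi_cd b v : (forall k j t, continuity_pt (b k j) t) -> forall n,
  (forall k t, continuity_pt (Wi b v n k) t) /\
  (forall k t, derivable_pt_lim (Wi b v (S n) k) t (bsum (fun j => b k j t * Wi b v n j t))).
Proof.
  intros Hb n. induction n as [|n [IH1 IH2]].
  - assert (Hc : forall k t, continuity_pt (Wi b v 0 k) t).
    { intros k t. simpl. apply continuity_pt_const. intros x y. reflexivity. }
    split. exact Hc. intros k t. simpl.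
    apply (RInt_deriv (fun s => bsum (fun j => b k j s * v j))).
    apply (integrand_cont b (Wi b v 0) k Hb Hc).
  - assert (Hc : forall k t, continuity_pt (Wi b v (S n) k) t).
    { intros k t. apply derivable_continuous_pt. eexists. apply IH2. }
    split. exact Hc. intros k t. 
    apply (RInt_deriv (fun s => bsum (fun j => b k j s * Wi b v (S n) j s))).
    apply (integrand_cont b (Wi b v (S n)) k Hb Hc).
Qed.

Lemma Wi_bound b v K r : (forall k j t, continuity_pt (b k j) t) ->
  (forall k j t, Rabs t <= r -> Rabs (b k j t) <= K) -> 0 <= K -> 0 <= r -> 2 * K * r <= /2 ->
  forall n k t, Rabs t <= r -> Rabs (Wi b v n k t) <= (Rabs (v false) + Rabs (v true)) * (/2)^n.
Proof.
  intros Hc HK HK0 Hr0 HKr n. induction n as [|n IH]; intros k t Ht.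
  - simpl. destruct k; pose proof (Rabs_pos (v false)); pose proof (Rabs_pos (v true)); lra.
  - simpl Wi. set (m := Rabs (v false) + Rabs (v true)).
    assert (Hm : 0 <= m * (/2)^n). { apply Rmult_le_pos. unfold m. pose proof (Rabs_pos (v false)); pose proof (Rabs_pos (v true)); lra. apply pow_le; lra. }
    eapply Rle_trans. apply (RInt_abs_bound _ t (2 * K * (m * (/2)^n))).
    + apply integrand_cont. auto. apply Wi_cd. auto.
    + intros s Hs. unfold bsum.
      assert (Hs' : Rabs s <= r) by lra.
      eapply Rle_trans. apply Rabs_triang. rewrite !Rabs_mult.
      assert (A1 := HK k false s Hs'). assert (A2 := HK k true s Hs').
      assert (B1 := IH false s Hs'). assert (B2 := IH true s Hs').
      fold m in B1, B2.
      pose proof (Rabs_pos (b k false s)); pose proof (Rabs_pos (b k true s)).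
      pose proof (Rabs_pos (Wi b v n false s)); pose proof (Rabs_pos (Wi b v n true s)).
      assert (Rabs (b k false s) * Rabs (Wi b v n false s) <= K * (m * (/2)^n)) by (apply Rmult_le_compat; auto).
      assert (Rabs (b k true s) * Rabs (Wi b v n true s) <= K * (m * (/2)^n)) by (apply Rmult_le_compat; auto).
      lra.
    + simpl. pose proof (Rabs_pos t).
      assert (Rabs t * (2 * K * (m * (/2)^n)) <= r * (2 * K * (m * (/2)^n))).
      { apply Rmult_le_compat_r; auto. apply Rmult_le_pos; auto. lra. }
      assert (r * (2 * K * (m * (/2)^n)) <= /2 * (m * (/2)^n)).
      { replace (r * (2 * K * (m * (/2)^n))) with ((2 * K * r) * (m * (/2)^n)) by ring.
        apply Rmult_le_compat_r; auto. }
      lra.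
Qed.

Definition Wc b v r n k t := Wi b v n k (clamp r t).
Definition dWc b v r n k t := match n with O => 0 | S n' => bsum (fun j => b k j (clamp r t) * Wc b v r n' j t) end.

Lemma Wc_cvn b v K r (Hc : forall k j t, continuity_pt (b k j) t)
  (HK : forall k j t, Rabs t <= r -> Rabs (b k j t) <= K) (HK0 : 0 <= K) (Hr0 : 0 <= r) (HKr : 2 * K * r <= /2) k :
  CVN_R (fun n t => Wc b v r n k t).
Proof.
  intros rr. set (m := Rabs (v false) + Rabs (v true)).
  assert (Hm : 0 <= m) by (unfold m; pose proof (Rabs_pos (v false)); pose proof (Rabs_pos (v true)); lra).
  exists (fun n => m * (/2)^n). destruct (geo_cv m Hm) as [l Hl]. exists l. split. exact Hl.
  intros n y _. unfold Wc. apply (Wi_bound b v K r); auto. apply clamp_abs; auto.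
Qed.

Lemma dWc_cvn b v K r (Hc : forall k j t, continuity_pt (b k j) t)
  (HK : forall k j t, Rabs t <= r -> Rabs (b k j t) <= K) (HK0 : 0 <= K) (Hr0 : 0 <= r) (HKr : 2 * K * r <= /2) k :
  CVN_R (fun n t => dWc b v r n k t).
Proof.
  intros rr. set (m := Rabs (v false) + Rabs (v true)).
  assert (Hm : 0 <= m) by (unfold m; pose proof (Rabs_pos (v false)); pose proof (Rabs_pos (v true)); lra).
  assert (Hm4 : 0 <= 4 * K * m) by (apply Rmult_le_pos; lra).
  exists (fun n => (4 * K * m) * (/2)^n). destruct (geo_cv _ Hm4) as [l Hl]. exists l. split. exact Hl.
  intros n y _. destruct n as [|n].
  - simpl. rewrite Rabs_R0. lra.
  - simpl dWc. unfold bsum.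
    assert (Hcl : Rabs (clamp r y) <= r) by (apply clamp_abs; auto).
    assert (B1 := Wi_bound b v K r Hc HK HK0 Hr0 HKr n false _ Hcl).
    assert (B2 := Wi_bound b v K r Hc HK HK0 Hr0 HKr n true _ Hcl). fold m in B1, B2.
    assert (A1 := HK k false _ Hcl). assert (A2 := HK k true _ Hcl).
    unfold Wc. eapply Rle_trans. apply Rabs_triang. rewrite !Rabs_mult.
    pose proof (Rabs_pos (b k false (clamp r y))); pose proof (Rabs_pos (b k true (clamp r y))).
    pose proof (Rabs_pos (Wi b v n false (clamp r y))); pose proof (Rabs_pos (Wi b v n true (clamp r y))).
    assert (Rabs (b k false (clamp r y)) * Rabs (Wi b v n false (clamp r y)) <= K * (m * (/2)^n)) by (apply Rmult_le_compat; auto).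
    assert (Rabs (b k true (clamp r y)) * Rabs (Wi b v n true (clamp r y)) <= K * (m * (/2)^n)) by (apply Rmult_le_compat; auto).
    simpl pow. lra.
Qed.

Lemma sp_shift b v r k x N :
  sum_f_R0 (fun i => dWc b v r i k x) (S N) =
  bsum (fun j => b k j (clamp r x) * sum_f_R0 (fun i => Wc b v r i j x) N).
Proof.
  induction N as [|N IH].
  - simpl. unfold bsum. ring.
  - change (sum_f_R0 (fun i => dWc b v r i k x) (S (S N))) with
      (sum_f_R0 (fun i => dWc b v r i k x) (S N) + dWc b v r (S (S N)) k x).
    rewrite IH. simpl. unfold bsum. ring.
Qed.

Lemma ode_exists b v : (forall k j t, continuity_pt (b k j) t) ->
  exists r, 0 < r /\ exists S : bool -> R -> R, (forall k, S k 0 = v k) /\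
    forall k t, Rabs t < r -> derivable_pt_lim (S k) t (bsum (fun j => b k j t * S j t)).
Proof.
  intros Hc.
  destruct (cont_bound (b false false) (Hc false false)) as [M1 [P1 Q1]].
  destruct (cont_bound (b false true) (Hc false true)) as [M2 [P2 Q2]].
  destruct (cont_bound (b true false) (Hc true false)) as [M3 [P3 Q3]].
  destruct (cont_bound (b true true) (Hc true true)) as [M4 [P4 Q4]].
  set (K := M1 + M2 + M3 + M4).
  assert (HK0 : 0 <= K) by (unfold K; lra).
  set (r := / (4 * (K + 1))).
  assert (Hr : 0 < r) by (unfold r; apply Rinv_0_lt_compat; lra).
  assert (Hr1 : r * (4 * (K + 1)) = 1) by (unfold r; field; lra).
  assert (Hr0 : 0 <= r) by lra.
  assert (Hrle : r <= 1) by nra.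
  assert (HKr : 2 * K * r <= /2) by nra.
  assert (HK : forall k j t, Rabs t <= r -> Rabs (b k j t) <= K).
  { intros k j t Ht. assert (Ht' : -1 <= t <= 1) by (unfold Rabs in Ht; destruct (Rcase_abs t); lra).
    destruct k, j; [apply Q4 in Ht'|apply Q3 in Ht'|apply Q2 in Ht'|apply Q1 in Ht']; unfold K; lra. }
  set (cv := fun k => CVN_R_CVS _ (Wc_cvn b v K r Hc HK HK0 Hr0 HKr k)).
  set (dcv := fun k => CVN_R_CVS _ (dWc_cvn b v K r Hc HK HK0 Hr0 HKr k)).
  set (Sf := fun k => SFL _ (cv k)).
  assert (HS : forall k x, Un_cv (fun N => sum_f_R0 (fun i => Wc b v r i k x) N) (Sf k x)).
  { intros k x. unfold Sf, SFL. destruct (cv k x) as [l Hl]. simpl. exact Hl. }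
  exists r. split. exact Hr. exists Sf. split.
  - intros k. eapply UL_sequence. apply HS.
    assert (E : forall N, sum_f_R0 (fun i => Wc b v r i k 0) N = v k).
    { induction N as [|N IH]. reflexivity. simpl. rewrite IH. unfold Wc.
      rewrite (clamp_id r 0) by (rewrite Rabs_R0; lra). simpl. rewrite RInt_point. unfold zero. simpl. ring. }
    intros eps He. exists O. intros n _. rewrite E. unfold Rdist. replace (v k - v k) with 0 by ring. rewrite Rabs_R0. lra.
  - intros k t Ht.
    set (rp := mkposreal r Hr).
    apply (CVU_derivable (SP (fun n t => Wc b v r n k t)) (SP (fun n t => dWc b v r n k t)) (Sf k)
       (fun t => bsum (fun j => b k j t * Sf j t)) 0 rp).
    + apply CVU_ext_lim with (SFL _ (dcv k)).
      * apply CVN_CVU. apply (dWc_cvn b v K r Hc HK HK0 Hr0 HKr k rp).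
      * intros x Hx. unfold Boule in Hx. simpl in Hx. rewrite Rminus_0_r in Hx.
        unfold SFL. destruct (dcv k x) as [L HL]. simpl.
        eapply UL_sequence. apply cv_shift. exact HL.
        unfold SP. intros eps He.
        assert (HH : Un_cv (fun N => bsum (fun j => b k j (clamp r x) * sum_f_R0 (fun i => Wc b v r i j x) N))
                   (bsum (fun j => b k j x * Sf j x))).
        { rewrite (clamp_id r x) by lra. unfold bsum.
          apply CV_plus; apply CV_mult; try apply cv_const; apply HS. }
        destruct (HH eps He) as [N HN]. exists N. intros n Hn. rewrite sp_shift. apply HN; auto.
    + intros x _. apply HS.
    + intros n x Hx. unfold Boule in Hx. simpl in Hx. rewrite Rminus_0_r in Hx.
      induction n as [|n IH].
      * unfold SP, Wc, dWc. simpl. apply derivable_pt_lim_const.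
      * unfold SP. simpl.
        apply (derivable_pt_lim_plus (fun x => sum_f_R0 (fun i => Wc b v r i k x) n) (fun x => Wc b v r (S n) k x)).
        exact IH.
        apply (deriv_loc (Wi b v (S n) k) _ x _ (r - Rabs x)). lra.
        { intros t0 Ht0. unfold Wc. rewrite clamp_id. reflexivity.
          pose proof (Rabs_triang_inv t0 x). lra. }
        unfold Wc. rewrite (clamp_id r x) by lra. apply Wi_cd; auto.
    + unfold Boule. simpl. rewrite Rminus_0_r. exact Ht.
Qed.

Definition G0 : christoffel := fun k i j _ _ => if j then (if k then 0 else if i then 0 else -1) else 0.

Lemma const_smooth2 (c : R) : smooth2 (fun _ _ => c).
Proof.
  exists (fun l _ _ => match l with nil => c | _ => 0 end). split. reflexivity.
  intros l x y. split; [|split].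
  - unfold partial. destruct l; apply derivable_pt_lim_const.
  - unfold partial. destruct l; apply derivable_pt_lim_const.
  - intros eps He. exists 1. split. lra. intros. replace (_ - _) with 0 by (destruct l; ring).
    rewrite Rabs_R0. lra.
Qed.

Lemma G0_smooth : smooth_conn G0.
Proof. intros k i j. unfold G0. destruct j, k, i; apply const_smooth2. Qed.

Lemma G0_par1 : parallel_field G0 Efr1.
Proof.
  exists (fun (i k : bool) (_ _ : R) => if k then 0 else if i then 0 else 1). split.
  - intros i k x y. unfold partial, Efr1. destruct i, k; simpl;
    first [apply derivable_pt_lim_const | apply derivable_pt_lim_id].
  - intros i k x y. unfold bsum, G0, Efr1. destruct i, k; simpl; ring.
Qed.

Lemma G0_par2 : parallel_field G0 Efr2.
Proof.
  exists (fun (_ _ : bool) (_ _ : R) => 0). split.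
  - intros i k x y. unfold partial, Efr2. destruct i, k; simpl; apply derivable_pt_lim_const.
  - intros i k x y. unfold bsum, G0, Efr2. destruct i, k; simpl; ring.
Qed.

Lemma deriv_const_unique (c d x : R) : derivable_pt_lim (fun _ => c) x d -> d = 0.
Proof. intros H. eapply uniqueness_limite. exact H. apply derivable_pt_lim_const. Qed.

Lemma deriv_id_unique (d x : R) : derivable_pt_lim (fun s => s) x d -> d = 1.
Proof. intros H. eapply uniqueness_limite. exact H. apply derivable_pt_lim_id. Qed.

Lemma gam0_eq (Gam0 : christoffel) : parallel_field Gam0 Efr1 -> parallel_field Gam0 Efr2 ->
  forall k i j x y, Gam0 k i j x y = G0 k i j x y.
Proof.
  intros [d1 [P1 E1]] [d2 [P2 E2]] k i j x y.
  assert (Z2 : d2 i k x y = 0).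
  { specialize (P2 i k x y). unfold partial, Efr2 in P2. destruct i, k; eapply deriv_const_unique; exact P2. }
  assert (Z1 : d1 i k x y = if k then 0 else if i then 0 else 1).
  { specialize (P1 i k x y). unfold partial, Efr1 in P1. destruct i, k;
    first [eapply deriv_const_unique; exact P1 | eapply deriv_id_unique; exact P1]. }
  specialize (E1 i k x y). specialize (E2 i k x y). unfold bsum, Efr1, Efr2 in *.
  rewrite Z1 in E1. rewrite Z2 in E2.
  assert (Hf : Gam0 k i false x y = 0) by (destruct k, i; simpl in E2; lra).
  rewrite Hf in E1. unfold G0. destruct j, k, i; simpl in E1; lra.
Qed.

Lemma const_on (a b : R) (f : R -> R) : a < 0 < b -> (forall t, a < t < b -> derivable_pt_lim f t 0) ->
  forall t, a < t < b -> f t = f 0.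
Proof.
  intros Hab Hd t Ht. destruct (Rtotal_order t 0) as [H|[H|H]].
  - destruct (MVT_cor2 f (fun _ => 0) t 0 H) as [c [Hc _]].
    { intros c Hc. apply Hd. lra. }
    lra.
  - subst. reflexivity.
  - destruct (MVT_cor2 f (fun _ => 0) 0 t H) as [c [Hc _]].
    { intros c Hc. apply Hd. lra. }
    lra.
Qed.

Lemma G0_holo : holonomy_invariant G0 Frand.
Proof.
  intros a b gam dgam V Hab [_ [Hg _]] [dV [HV HE]] t Ht.
  assert (Ey : forall s, a < s < b -> dV true s = 0).
  { intros s Hs. specialize (HE true s Hs). unfold bsum, G0 in HE. simpl in HE. lra. }
  assert (Ex : forall s, a < s < b -> dV false s = dgam false s * V true s).
  { intros s Hs. specialize (HE false s Hs). unfold bsum, G0 in HE. simpl in HE. lra. }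
  assert (C1 : V true t = V true 0).
  { apply (const_on a b); auto. intros s Hs. rewrite <- (Ey s Hs). apply HV. exact Hs. }
  assert (C2 : V false t - gam false t * V true t = V false 0 - gam false 0 * V true 0).
  { apply (const_on a b (fun s => V false s - gam false s * V true s)); auto. intros s Hs.
    replace 0 with (dV false s - (dgam false s * V true s + gam false s * dV true s)).
    apply (derivable_pt_lim_minus (V false) (fun s => gam false s * V true s)). apply HV; auto.
    apply (derivable_pt_lim_mult (gam false) (V true)). apply Hg; auto. apply HV; auto.
    rewrite Ex, Ey by auto. ring. }
  unfold Frand. rewrite C1 in C2 |- *.
  replace (- V false t + gam false t * V true 0) with (- V false 0 + gam false 0 * V true 0) by lra.
  reflexivity.
Qed.

Lemma smooth_cont (f : R -> R -> R) : smooth2 f -> forall x y, continuous2 f x y.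
Proof.
  intros [D [H0 H]] x y. assert (E : D nil = f).
  { apply functional_extensionality. intros a. apply functional_extensionality. intros c. apply H0. }
  rewrite <- E. apply H.
Qed.

Lemma cont_line (f : R -> R -> R) x0 y0 (i0 : bool) : (forall x y, continuous2 f x y) ->
  forall t, continuity_pt (fun t => f (x0 + (if i0 then 0 else t)) (y0 + (if i0 then t else 0))) t.
Proof.
  intros Hc t eps He.
  destruct (Hc (x0 + (if i0 then 0 else t)) (y0 + (if i0 then t else 0)) eps He) as [d [Hd H]].
  exists d. split. exact Hd. intros t' [_ Ht']. simpl in *. unfold R_dist in *.
  destruct i0; simpl in *; apply H;
    first [ match goal with |- Rabs (?a + t' - (?a + t)) < _ => replace (a + t' - (a + t)) with (t' - t) by ring end
          | match goal with |- Rabs (?a - ?a) < _ => replace (a - a) with 0 by ring end];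
    try rewrite Rabs_R0; lra.
Qed.

Lemma deriv_ext (f g : R -> R) x l : (forall t, g t = f t) -> derivable_pt_lim f x l -> derivable_pt_lim g x l.
Proof. intros E H. apply (deriv_loc f g x l 1). lra. intros; apply E. exact H. Qed.

Lemma deriv_phi (A B G : R -> R) a' b' g' c t :
  derivable_pt_lim A t a' -> derivable_pt_lim B t b' -> derivable_pt_lim G t g' ->
  derivable_pt_lim (fun t => 4 * B t ^ 2 + 12 * (- A t + G t * B t) ^ 2 - (c + B t) ^ 2) t
    (8 * B t * b' + 24 * (- A t + G t * B t) * (- a' + g' * B t + G t * b') - 2 * (c + B t) * b').
Proof.
  intros HA HB HG.
  set (w := fun t => - A t + G t * B t).
  assert (Hw : derivable_pt_lim w t (- a' + (g' * B t + G t * b'))).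
  { apply (derivable_pt_lim_plus (fun t => - A t) (fun t => G t * B t)).
    apply (derivable_pt_lim_opp A). exact HA. apply (derivable_pt_lim_mult G B); auto. }
  assert (Hcb : derivable_pt_lim (fun t => c + B t) t (0 + b')).
  { apply (derivable_pt_lim_plus (fun _ => c) B). apply derivable_pt_lim_const. exact HB. }
  apply (deriv_ext (fun t => 4 * (B t * B t) + 12 * (w t * w t) - (c + B t) * (c + B t))).
  { intros s. unfold w. ring. }
  replace (8 * B t * b' + 24 * (- A t + G t * B t) * (- a' + g' * B t + G t * b') - 2 * (c + B t) * b')
    with (4 * (b' * B t + B t * b') + 12 * ((- a' + (g' * B t + G t * b')) * w t + w t * (- a' + (g' * B t + G t * b')))
          - ((0 + b') * (c + B t) + (c + B t) * (0 + b'))) by (unfold w; ring).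
  apply (derivable_pt_lim_minus (fun t => 4 * (B t * B t) + 12 * (w t * w t)) (fun t => (c + B t) * (c + B t))).
  apply (derivable_pt_lim_plus (fun t => 4 * (B t * B t)) (fun t => 12 * (w t * w t))).
  apply (derivable_pt_lim_scal (fun t => B t * B t)). apply (derivable_pt_lim_mult B B); auto.
  apply (derivable_pt_lim_scal (fun t => w t * w t)). apply (derivable_pt_lim_mult w w); auto.
  apply (derivable_pt_lim_mult (fun t => c + B t) (fun t => c + B t)); auto.
Qed.

Lemma dl1 c t : derivable_pt_lim (fun t => c + t) t 1.
Proof. replace 1 with (0 + 1) by ring. apply (derivable_pt_lim_plus (fun _ => c) (fun t => t)).
  apply derivable_pt_lim_const. apply derivable_pt_lim_id. Qed.
Lemma dl0 c t : derivable_pt_lim (fun _ => c + 0) t 0.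
Proof. apply derivable_pt_lim_const. Qed.

Definition sval (Gam : christoffel) (i0 : bool) (x0 y0 : R) (v : bool -> R) (k : bool) : R :=
  - bsum (fun j => Gam k i0 j x0 y0 * v j).

Lemma key_cond (Gam : christoffel) : smooth_conn Gam -> holonomy_invariant Gam Frand ->
  forall x0 y0 (i0 : bool) (v : bool -> R),
  8 * v true * sval Gam i0 x0 y0 v true
  + 24 * (- v false + x0 * v true) * (- sval Gam i0 x0 y0 v false + (if i0 then 0 else 1) * v true + x0 * sval Gam i0 x0 y0 v true)
  = 2 * sqrt (4 * v true ^ 2 + 12 * (- v false + x0 * v true) ^ 2) * sval Gam i0 x0 y0 v true.
Proof.
  intros Hsm Hh x0 y0 i0 v.
  set (gam := fun (i : bool) (t : R) => if i then y0 + (if i0 then t else 0) else x0 + (if i0 then 0 else t)).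
  set (dgam := fun (i : bool) (t : R) => if i then (if i0 then 1 else 0) else (if i0 then 0 else 1)).
  set (bb := fun k j t => - bsum (fun i => Gam k i j (gam false t) (gam true t) * dgam i t)).
  assert (Hbb : forall k j t, continuity_pt (bb k j) t).
  { intros k j t. unfold bb, bsum.
    apply (continuity_pt_opp (fun t => Gam k false j (gam false t) (gam true t) * dgam false t +
                                       Gam k true j (gam false t) (gam true t) * dgam true t)).
    apply (continuity_pt_plus (fun t => Gam k false j (gam false t) (gam true t) * dgam false t)
                              (fun t => Gam k true j (gam false t) (gam true t) * dgam true t));
    apply (continuity_pt_mult (fun t => Gam k _ j (gam false t) (gam true t)) (fun t => dgam _ t));
    try (apply continuity_pt_const; intros a c; reflexivity);
    apply (cont_line (Gam k _ j) x0 y0 i0); apply smooth_cont; apply Hsm. }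
  destruct (ode_exists bb v Hbb) as [r [Hr [S [HS0 HSd]]]].
  assert (Hg : forall i t, derivable_pt_lim (gam i) t (dgam i t)).
  { intros i t. unfold gam, dgam. destruct i, i0.
    all: simpl; first [apply dl1 | apply dl0]. }
  assert (Hreg : regular_curve (-r) r gam dgam).
  { split; [|split].
    - intros i. exists (fun n t => match n with O => gam i t | S O => dgam i t | _ => 0 end).
      split. reflexivity. intros n t _. destruct n as [|[|n]].
      + apply Hg.
      + unfold dgam. destruct i, i0; apply derivable_pt_lim_const.
      + apply derivable_pt_lim_const.
    - intros i t _. apply Hg.
    - intros t _. unfold dgam. destruct i0; simpl; [right|left]; lra. }
  assert (Hpar : parallel_along Gam (-r) r gam dgam S).
  { exists (fun k t => bsum (fun j => bb k j t * S j t)). split.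
    - intros k t Ht. apply HSd. unfold Rabs; destruct (Rcase_abs t); lra.
    - intros k t Ht. unfold bb, bsum. ring. }
  assert (Hab : -r < 0 < r) by lra.
  assert (HF := Hh (-r) r gam dgam S Hab Hreg Hpar).
  set (c := Frand (gam false 0) (gam true 0) (S false 0) (S true 0)).
  set (phi := fun t => 4 * S true t ^ 2 + 12 * (- S false t + gam false t * S true t) ^ 2 - (c + S true t) ^ 2).
  assert (Hphi : forall t, Rabs (t - 0) < r -> 0 = phi t).
  { intros t Ht. rewrite Rminus_0_r in Ht.
    assert (Ht' : -r < t < r) by (unfold Rabs in Ht; destruct (Rcase_abs t); lra).
    specialize (HF t Ht'). fold c in HF. unfold Frand in HF. unfold phi.
    set (Q := 4 * S true t ^ 2 + 12 * (- S false t + gam false t * S true t) ^ 2) in *.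
    assert (HQ : 0 <= Q) by (unfold Q; pose proof (pow2_ge_0 (S true t)); pose proof (pow2_ge_0 (- S false t + gam false t * S true t)); lra).
    replace (c + S true t) with (sqrt Q) by lra.
    replace (sqrt Q ^ 2) with (sqrt Q * sqrt Q) by ring. rewrite sqrt_sqrt by exact HQ. ring. }
  assert (HD := deriv_phi (S false) (S true) (gam false)
                  (bsum (fun j => bb false j 0 * S j 0)) (bsum (fun j => bb true j 0 * S j 0)) (dgam false 0) c 0
                  (HSd false 0 ltac:(rewrite Rabs_R0; lra)) (HSd true 0 ltac:(rewrite Rabs_R0; lra)) (Hg false 0)).
  fold phi in HD.
  assert (HD0 := deriv_loc phi (fun _ => 0) 0 _ r Hr Hphi HD).
  apply deriv_const_unique in HD0.
  unfold c, Frand in HD0. rewrite !HS0 in HD0.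
  unfold sval, bb, bsum, gam, dgam in *. rewrite !HS0 in HD0.
  destruct i0; simpl in HD0 |- *; rewrite !Rplus_0_r in HD0; lra.
Qed.

Lemma sqrt_val a b : 0 <= b -> a = b * b -> sqrt a = b.
Proof. intros Hb ->. apply sqrt_square. exact Hb. Qed.

Lemma uniq (Gam : christoffel) : smooth_conn Gam -> holonomy_invariant Gam Frand ->
  forall k i j x y, Gam k i j x y = G0 k i j x y.
Proof.
  intros Hs Hh k i j x0 y0.
  assert (K1 := key_cond Gam Hs Hh x0 y0 i (fun k => if k then 1 else x0)).
  assert (K2 := key_cond Gam Hs Hh x0 y0 i (fun k => if k then 0 else -1)).
  assert (K3 := key_cond Gam Hs Hh x0 y0 i (fun k => if k then 1 else x0 - 1)).
  assert (K4 := key_cond Gam Hs Hh x0 y0 i (fun k => if k then 1 else x0 + 1)).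
  unfold sval, bsum in *; simpl in *.
  rewrite (sqrt_val _ 2) in K1; [| lra | ring].
  rewrite (sqrt_val _ 4) in K3; [| lra | ring].
  rewrite (sqrt_val _ 4) in K4; [| lra | ring].
  match type of K2 with context [sqrt ?a] => assert (Hq : 0 < sqrt a) by (apply sqrt_lt_R0; nra); set (q := sqrt a) in * end.
  set (A := Gam false i false x0 y0) in *. set (B := Gam false i true x0 y0) in *.
  set (C := Gam true i false x0 y0) in *. set (D := Gam true i true x0 y0) in *.
  set (e := if i then 0 else 1) in *.
  assert (HAC : A = x0 * C) by lra.
  assert (HC : C = 0).
  { assert (q * C = 0) by (rewrite HAC in K2; lra).
    apply Rmult_integral in H. destruct H; lra. }
  assert (HA : A = 0) by (rewrite HAC, HC; ring).
  rewrite HA, HC in *.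
  assert (HD : D = 0) by lra.
  rewrite HD in *.
  assert (HB : B = - e) by lra.
  unfold G0. destruct k, j; fold A B C D; try lra.
  rewrite HB. unfold e. destruct i; ring.
Qed.

Theorem mainTheorem8 :
  (exists Gam0 : christoffel,
      smooth_conn Gam0 /\ parallel_field Gam0 Efr1 /\ parallel_field Gam0 Efr2) /\
  (forall Gam0 : christoffel,
      smooth_conn Gam0 -> parallel_field Gam0 Efr1 -> parallel_field Gam0 Efr2 ->
      holonomy_invariant Gam0 Frand /\
      (forall Gam : christoffel, smooth_conn Gam -> holonomy_invariant Gam Frand ->
         forall k i j x y, Gam k i j x y = Gam0 k i j x y) /\
      (forall x y, torsion Gam0 x y (fun k => Efr1 k x y) (fun k => Efr2 k x y) false = -1 /\
                   torsion Gam0 x y (fun k => Efr1 k x y) (fun k => Efr2 k x y) true = 0)) /\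
  (forall Gam : christoffel, smooth_conn Gam -> torsion_free Gam ->
      ~ holonomy_invariant Gam Frand).
Proof.
  split; [|split].
  - exists G0. split; [apply G0_smooth | split; [apply G0_par1 | apply G0_par2]].
  - intros Gam0 Hs P1 P2.
    assert (E : Gam0 = G0).
    { apply functional_extensionality; intro k. apply functional_extensionality; intro i.
      apply functional_extensionality; intro j. apply functional_extensionality; intro x.
      apply functional_extensionality; intro y. apply gam0_eq; auto. }
    rewrite E. split; [apply G0_holo | split].
    + intros Gam HsG HhG k i j x y. apply uniq; auto.
    + intros x y. unfold torsion, bsum, G0, Efr1, Efr2; simpl; split; ring.
  - intros Gam Hs Htf Hh.
    specialize (Htf false false true 0 0).
    rewrite !(uniq Gam Hs Hh) in Htf. unfold G0 in Htf; simpl in Htf. lra.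
Qed.
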